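(* The set $\mathcal V=\{\mathbf u(\mathbf B):\mathbf B\in S\}$ is a set of pairwise $M$-distinct vertices of $\mathcal H$, and every vertex of $\mathcal H$ is $M$-equivalent to some member of $\mathcal V$.
   Context: Let $n\ge 1$, $[n]=\{0,\dots,n-1\}$, and real numbers $\gamma_0<\gamma_1<\dots<\gamma_{n-1}$. Consider vectors $\mathbf v=(v_{ydz})_{y\in[n],d,z\in\{0,1\}}\in\mathbb R^{4n}$. Define the linear map $M$ by $(M\mathbf v)_{(i,j,d_0,d_1)}=\sum_{z\in\{0,1\}:d_z=0}v_{i0z}+\sum_{z\in\{0,1\}:d_z=1}v_{j1z}$ for $i,j\in[n]$, $(d_0,d_1)\in\{0,1\}^2$, and $c_{(i,j,d_0,d_1)}=\gamma_j-\gamma_i$. Let $\mathcal H=\{\mathbf v: M\mathbf v\le \mathbf c\}$. Two vectors $\mathbf v_1,\mathbf v_2$ are $M$-equivalent if $M\mathbf v_1=M\mathbf v_2$, and $M$-distinct otherwise. A point $\mathbf v\in\mathcal H$ is a vertex of $\mathcal H$ if whenever $\mathbf v=\lambda\mathbf v_1+(1-\lambda)\mathbf v_2$ with $\lambda\in(0,1)$, $\mathbf v_1,\mathbf v_2\in\mathcal H$, we have $M\mathbf v_1=M\mathbf v_2=M\mathbf v$. Admissible signatures: $S=S_1\cup S_2\cup S_3$, sets of binary arrays $\mathbf B=(B_{ydz})\in\{0,1\}^{n\times2\times2}$: (1) $\mathbf B\in S_1$ iff there is $t\in\{0,\dots,n-2\}$ with $B_{i00}=B_{i01}=1$ for all $i\ge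 t$ and $B_{i00}\ne B_{i01}$ for all $i<t$; $B_{i10}\ne B_{i11}$ for all $i\in[n]$; and there exist $i,j$ with $B_{i10}=B_{j11}=1$. (2) $\mathbf B\in S_2$ iff $B_{(n-1)00}=B_{(n-1)01}=B_{010}=B_{011}=1$; $B_{i00}\ne B_{i01}$ for all $0\le i<n-1$; $B_{j10}\ne B_{j11}$ for all $0<j\le n-1$. (3) $\mathbf B\in S_3$ iff there is $t\in\{1,\dots,n-1\}$ with $B_{i10}=B_{i11}=1$ for all $i\le t$ and $B_{i10}\ne B_{i11}$ for all $i>t$; $B_{i00}\ne B_{i01}$ for all $i\in[n]$; and there exist $i,j$ with $B_{i00}=B_{j01}=1$. Vertex map: for $\mathbf B\in S$, set $\alpha=-\gamma_0-\gamma_t$ if $\mathbf B\in S_1$, $\alpha=-\gamma_0-\gamma_{n-1}$ if $\mathbf B\in S_2$, $\alpha=-\gamma_t-\gamma_{n-1}$ if $\mathbf B\in S_3$ ($t$ as in the respective definition), and define $\mathbf u(\mathbf B)$ by: $u_{i00}=-\gamma_i-\alpha$ if $B_{i00}=1$, else $\gamma_0$; $u_{i10}=\gamma_i$ if $B_{i10}=1$, else $-\gamma_{n-1}-\alpha$; $u_{i01}=-\gamma_i$ if $B_{i01}=1$, else $\gamma_0+\alpha$; $u_{i11}=\gamma_i+\alpha$ if $B_{i11}=1$, else $-\gamma_{n-1}$. *)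

(* Defs.v *)
From mathcomp Require Import all_boot all_order all_algebra.
Set Implicit Arguments. Unset Strict Implicit. Unset Printing Implicit Defensive.
Import Order.TTheory GRing.Theory Num.Theory.
Local Open Scope ring_scope.

(* Vectors v = (v_{ydz}) in R^{4n}: y : 'I_n, d z : bool (false = 0, true = 1). *)
Definition vec (T : Type) (n : nat) := 'I_n -> bool -> bool -> T.

Definition Mop (R : realFieldType) (n : nat) (v : vec R n)
    (i j : 'I_n) (d0 d1 : bool) : R :=
  let d := fun z : bool => if z then d1 else d0 in
  \sum_(z : bool | ~~ d z) v i false z + \sum_(z : bool | d z) v j true z.

(* c_{(i,j,d0,d1)} = gamma_j - gamma_i ; gamma indexed by nat, only 0..n-1 used *)
Definition cvec (R : realFieldType) (n : nat) (gamma : nat -> R)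
    (i j : 'I_n) (d0 d1 : bool) : R := gamma j - gamma i.

Definition inH (R : realFieldType) (n : nat) (gamma : nat -> R) (v : vec R n) : Prop :=
  forall (i j : 'I_n) (d0 d1 : bool), Mop v i j d0 d1 <= cvec gamma i j d0 d1.

Definition Mequiv (R : realFieldType) (n : nat) (v1 v2 : vec R n) : Prop :=
  forall (i j : 'I_n) (d0 d1 : bool), Mop v1 i j d0 d1 = Mop v2 i j d0 d1.

Definition is_vertex (R : realFieldType) (n : nat) (gamma : nat -> R) (v : vec R n) : Prop :=
  inH gamma v /\
  forall (lam : R) (v1 v2 : vec R n),
    0 < lam < 1 -> inH gamma v1 -> inH gamma v2 ->
    (forall y d z, v y d z = lam * v1 y d z + (1 - lam) * v2 y d z) ->
    Mequiv v1 v /\ Mequiv v2 v.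

Definition inS1 (n : nat) (B : vec bool n) (t : nat) : Prop :=
  (t.+2 <= n)%N /\
  (forall i : 'I_n, (t <= i)%N -> B i false false /\ B i false true) /\
  (forall i : 'I_n, (i < t)%N -> B i false false != B i false true) /\
  (forall i : 'I_n, B i true false != B i true true) /\
  (exists i j : 'I_n, B i true false /\ B j true true).

Definition inS2 (n : nat) (B : vec bool n) : Prop :=
  (forall i : 'I_n, nat_of_ord i = n.-1 -> B i false false /\ B i false true) /\
  (forall i : 'I_n, nat_of_ord i = 0%N -> B i true false /\ B i true true) /\
  (forall i : 'I_n, (i < n.-1)%N -> B i false false != B i false true) /\
  (forall j : 'I_n, (0 < j)%N -> B j true false != B j true true).

Definition inS3 (n : nat) (B : vec bool n) (t : nat) : Prop :=
  (1 <= t)%N /\ (t <= n.-1)%N /\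
  (forall i : 'I_n, (i <= t)%N -> B i true false /\ B i true true) /\
  (forall i : 'I_n, (t < i)%N -> B i true false != B i true true) /\
  (forall i : 'I_n, B i false false != B i false true) /\
  (exists i j : 'I_n, B i false false /\ B j false true).

Definition inS (n : nat) (B : vec bool n) : Prop :=
  (exists t, inS1 B t) \/ inS2 B \/ (exists t, inS3 B t).

Definition uvec (R : realFieldType) (n : nat) (gamma : nat -> R) (alpha : R)
    (B : vec bool n) : vec R n :=
  fun y d z =>
    match d, z with
    | false, false => if B y false false then - gamma y - alpha else gamma 0%N
    | true, false  => if B y true false then gamma y else - gamma n.-1 - alpha
    | false, true  => if B y false true then - gamma y else gamma 0%N + alpha
    | true, true   => if B y true true then gamma y + alpha else - gamma n.-1
    end.

(* The set V = { u(B) : B in S }, with alpha chosen according to the part of S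
   containing B (S1, S2, S3 are pairwise disjoint and t is determined by B). *)
Definition inV (R : realFieldType) (n : nat) (gamma : nat -> R) (v : vec R n) : Prop :=
  exists B : vec bool n,
    (exists t, inS1 B t /\ v = uvec gamma (- gamma 0%N - gamma t) B) \/
    (inS2 B /\ v = uvec gamma (- gamma 0%N - gamma n.-1) B) \/
    (exists t, inS3 B t /\ v = uvec gamma (- gamma t - gamma n.-1) B).

(* Main.v *)
Require Import Defs.
From mathcomp Require Import all_boot all_order all_algebra.
From mathcomp Require Import lra zify.
From Stdlib Require Import Classical FunctionalExtensionality.
Set Implicit Arguments. Unset Strict Implicit. Unset Printing Implicit Defensive.
Import Order.TTheory GRing.Theory Num.Theory.
Local Open Scope ring_scope.

Lemma MopE (R : realFieldType) n (v : vec R n) i j d0 d1 :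
  Mop v i j d0 d1 = (if d0 then v j true false else v i false false)
                  + (if d1 then v j true true else v i false true).
Proof.
rewrite /Mop big_mkcond [X in _ + X]big_mkcond /= !big_bool /=.
by case: d0; case: d1 => /=; lra.
Qed.

Lemma tight_split (R : realFieldType) (lam x x1 x2 c : R) : 0 < lam < 1 ->
  x = lam * x1 + (1 - lam) * x2 -> x = c -> x1 <= c -> x2 <= c -> x1 = c /\ x2 = c.
Proof.
move=> /andP [l0 l1] E Ec h1 h2.
have a : lam * (c - x1) = 0 by nra.
have b : (1 - lam) * (c - x2) = 0 by nra.
move: a b => /eqP; rewrite mulf_eq0 => /orP [/eqP|/eqP] a; first lra.
move/eqP; rewrite mulf_eq0 => /orP [/eqP|/eqP] b; lra.
Qed.

Section S.
Variable R : realFieldType.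
Variable m : nat.
Notation n := m.+1.
Variable gamma : nat -> R.

Definition tight (v : vec R n) i j d0 d1 := Mop v i j d0 d1 = cvec gamma i j d0 d1.
Definition closedK (v : vec R n) (K : vec bool n) := forall i j d0 d1, tight v i j d0 d1 ->
  (if d0 then K j true false else K i false false) = (if d1 then K j true true else K i false true).
Definition Conn (v : vec R n) := forall K, closedK v K ->
  forall y d z y' d' z', K y d z -> K y' d' z'.

Lemma Mequiv_shift (w v : vec R n) : Mequiv w v ->
  exists s, forall y d z, w y d z = v y d z + (if z then -s else s).
Proof.
move=> H; set s := w ord0 false false - v ord0 false false; exists s.
have He j : w j true true = v j true true - s.
  have := H ord0 j false true; rewrite !MopE /= /s; lra.
have Ha i : w i false false = v i false false + s.
  have := H i ord0 false true; rewrite !MopE /= He; lra.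
have Hb i : w i false true = v i false true - s.
  have := H i ord0 false false; rewrite !MopE /= Ha; lra.
have Hc j : w j true false = v j true false + s.
  have := H ord0 j true false; rewrite !MopE /= Hb; lra.
by move=> y [] [] /=; rewrite ?Ha ?Hb ?Hc ?He.
Qed.

Lemma shift_Mequiv (w v : vec R n) s :
  (forall y d z, w y d z = v y d z + (if z then -s else s)) -> Mequiv w v.
Proof.
move=> H i j d0 d1; rewrite !MopE.
by case: d0; case: d1; rewrite !H /=; lra.
Qed.

Lemma conn_equiv (v w : vec R n) : Conn v ->
  (forall i j d0 d1, tight v i j d0 d1 -> tight w i j d0 d1) -> Mequiv w v.
Proof.
move=> Hc Ht.
set del := w ord0 false false - v ord0 false false.
pose K : vec bool n := fun y d z => ((if z then -1 else 1) * (w y d z - v y d z) == del).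
have HK : closedK v K.
  move=> i j d0 d1 T; have := Ht _ _ _ _ T; move: T; rewrite /tight !MopE => T1 T2.
  rewrite /K; case: d0 T1 T2; case: d1 => /= T1 T2;
  rewrite mul1r mulN1r; congr (_ == _); lra.
have K0 : K ord0 false false by rewrite /K mul1r.
apply: (@shift_Mequiv _ _ del) => y d z.
have := Hc K HK _ _ _ y d z K0; rewrite /K; case: z => /eqP; lra.
Qed.

Lemma conn_vertex (v : vec R n) : inH gamma v -> Conn v -> is_vertex gamma v.
Proof.
move=> Hv Hc; split=> // lam v1 v2 Hl H1 H2 Hcomb.
have T i j d0 d1 : tight v i j d0 d1 -> tight v1 i j d0 d1 /\ tight v2 i j d0 d1.
  move=> T; apply: (tight_split Hl _ T (H1 i j d0 d1) (H2 i j d0 d1)).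
  by clear T; rewrite !MopE; case: d0; case: d1; rewrite !Hcomb; lra.
split; apply: conn_equiv => // i j d0 d1 /T []//.
Qed.

Lemma aux_bound (eps sl : R) (ka kb : bool) : 0 < eps -> 0 <= sl ->
  (0 < sl -> eps <= sl) -> (sl = 0 -> ka = kb) ->
  - sl <= (if ka then eps else 0) + (if kb then -eps else 0) <= sl.
Proof.
move=> e0 s0 es E.
have H : ka <> kb -> eps <= sl.
  move=> nk; apply: es; rewrite lt_def s0 andbT; apply/eqP => /E //.
case: ka E H; case: kb => E H /=; rewrite ?subrr ?addr0 ?add0r;
  try (apply/andP; split; lra);
  have := H ltac:(by []); move=> h; apply/andP; split; lra.
Qed.

Lemma vertex_conn (v : vec R n) : is_vertex gamma v -> Conn v.
Proof.
move=> [Hv Hvert] K HK y d z y' d' z' Ky.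
case: (boolP (K y' d' z')) => // nK; exfalso.
pose slack (r : 'I_n * 'I_n * bool * bool) :=
  cvec gamma r.1.1.1 r.1.1.2 r.1.2 r.2 - Mop v r.1.1.1 r.1.1.2 r.1.2 r.2.
pose eps := \big[Num.min/1]_(r | 0 < slack r) slack r.
have e0 : 0 < eps.
  rewrite /eps; apply: (big_ind (fun x => 0 < x)) => //.
  by move=> a b a0 b0; rewrite lt_min a0 b0.
have es r : 0 < slack r -> eps <= slack r.
  by move=> h; rewrite /eps (bigD1 r) //= ge_min lexx.
pose dv : vec R n := fun y d z => if K y d z then (if z then -eps else eps) else 0.
have key i j d0 d1 : - slack (i, j, d0, d1) <= Mop dv i j d0 d1 <= slack (i, j, d0, d1).
  rewrite MopE.
  have -> : (if d0 then dv j true false else dv i false false) =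
            if (if d0 then K j true false else K i false false) then eps else 0.
    by case: d0.
  have -> : (if d1 then dv j true true else dv i false true) =
            if (if d1 then K j true true else K i false true) then -eps else 0.
    by case: d1.
  apply: aux_bound => //.
  - by rewrite /slack /=; have := Hv i j d0 d1; lra.
  - exact: es.
  - move=> h; apply: HK; rewrite /tight; move: h; rewrite /slack /=; lra.
pose v1 : vec R n := fun y d z => v y d z + dv y d z.
pose v2 : vec R n := fun y d z => v y d z - dv y d z.
have M1 i j d0 d1 : Mop v1 i j d0 d1 = Mop v i j d0 d1 + Mop dv i j d0 d1.
  by rewrite !MopE /v1; case: d0; case: d1; lra.
have M2 i j d0 d1 : Mop v2 i j d0 d1 = Mop v i j d0 d1 - Mop dv i j d0 d1.
  by rewrite !MopE /v2; case: d0; case: d1; lra.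
have I1 : inH gamma v1.
  move=> i j d0 d1; rewrite M1; have := key i j d0 d1; rewrite /slack /= => /andP[]; lra.
have I2 : inH gamma v2.
  move=> i j d0 d1; rewrite M2; have := key i j d0 d1; rewrite /slack /= => /andP[]; lra.
have h12 : 0 < (1/2 : R) < 1 by apply/andP; split; lra.
have [E _] := Hvert (1/2) v1 v2 h12 I1 I2 (fun y d z => ltac:(rewrite /v1 /v2; lra)).
have [s Hs] := Mequiv_shift E.
have := Hs y d z; have := Hs y' d' z'; rewrite /v1 /dv Ky (negbTE nK).
clear -e0; case: z; case: z' => /=; lra.
Qed.


Hypothesis gmono : forall i j : nat, (i < j < n)%N -> gamma i < gamma j.

Lemma gle (i j : nat) : (i <= j)%N -> (j < n)%N -> gamma i <= gamma j.
Proof.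
rewrite leq_eqVlt => /orP [/eqP -> //| lt] jn; apply: ltW; apply: gmono.
by rewrite lt jn.
Qed.
Lemma glt (i j : nat) : (i < j)%N -> (j < n)%N -> gamma i < gamma j.
Proof. by move=> lt jn; apply: gmono; rewrite lt jn. Qed.
Lemma g0le (j : 'I_n) : gamma 0%N <= gamma j.
Proof. exact: gle. Qed.
Lemma glem (j : 'I_n) : gamma j <= gamma m.
Proof. by apply: gle => //; rewrite -ltnS. Qed.

Definition good (alpha : R) (B : vec bool n) :=
  [/\ (forall i : 'I_n, if B i false false && B i false true
        then - alpha <= gamma 0%N + gamma i else gamma 0%N + gamma i <= - alpha),
      (forall j : 'I_n, if B j true false && B j true true
        then alpha <= - gamma j - gamma m else - gamma j - gamma m <= alpha),
      (forall i : 'I_n, B i false false || B i false true),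
      (forall j : 'I_n, B j true false || B j true true) &
      [/\ (exists i, B i false false), (exists i, B i false true),
          (exists j, B j true false), (exists j, B j true true) &
          (exists i : 'I_n, [/\ B i false false, B i false true & alpha = - gamma 0%N - gamma i])
          \/ (exists j : 'I_n, [/\ B j true false, B j true true & alpha = - gamma j - gamma m])]].

Lemma inH_u alpha B : good alpha B -> inH gamma (uvec gamma alpha B).
Proof.
case=> Hi Hj _ _ _ i j d0 d1; rewrite MopE /cvec.
move: (Hi i) (Hj j) (g0le i) (g0le j) (glem i) (glem j).
rewrite /uvec /=.
case: d0; case: d1; case: (B i false false); case: (B i false true);
  case: (B j true false); case: (B j true true) => /=; lra.
Qed.

Lemma conn_u alpha B : good alpha B -> Conn (uvec gamma alpha B).
Proof.
case=> _ _ c1 c2 [[i0 e00] [i1 e01] [j1 e10] [j0 e11] c4] K HK.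
pose u := uvec gamma alpha B.
have TX i j : B i false false -> B j true true -> K i false false = K j true true.
  move=> h1 h2; apply: (HK i j false true).
  by rewrite /tight MopE /cvec /uvec /= h1 h2; lra.
have TY i j : B i false true -> B j true false -> K j true false = K i false true.
  move=> h1 h2; apply: (HK i j true false).
  by rewrite /tight MopE /cvec /uvec /= h1 h2; lra.
have TP i : B i false false != B i false true -> K i false false = K i false true.
  move=> h; apply: (HK i ord0 false false).
  by rewrite /tight MopE /cvec /uvec /=; move: h;
    case: (B i false false); case: (B i false true) => //= _; lra.
have TQ j : B j true false != B j true true -> K j true false = K j true true.
  move=> h; apply: (HK ord_max j true true).
  by rewrite /tight MopE /cvec /uvec /=; move: h;
    case: (B j true false); case: (B j true true) => //= _; lra.
have KA i : B i false false -> K i false false = K i0 false false.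
  by move=> h; rewrite (TX i j0) // (TX i0 j0).
have KE j : B j true true -> K j true true = K i0 false false.
  by move=> h; rewrite (TX i0 j).
have KB i : B i false true -> K i false true = K i1 false true.
  by move=> h; rewrite -(TY i j1) // (TY i1 j1).
have KC j : B j true false -> K j true false = K i1 false true.
  by move=> h; rewrite (TY i1 j).
have hAB : K i0 false false = K i1 false true.
  case: c4 => [[i [h1 h2 ha]] | [j [h1 h2 ha]]].
  - rewrite -(KA i h1) -(KB i h2); apply: (HK i ord0 false false).
    by rewrite /tight MopE /cvec /uvec /= h1 h2 ha; lra.
  - rewrite -(KE j h2) -(KC j h1); apply/esym; apply: (HK ord_max j true true).
    by rewrite /tight MopE /cvec /uvec /= h1 h2 ha; lra.
have Kall y d z : K y d z = K i0 false false.
  case: d; case: z.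
  - case: (boolP (B y true true)) => h; first by rewrite KE.
    have h' : B y true false by move: (c2 y); rewrite (negbTE h) orbF.
    rewrite -TQ; first by rewrite KC. by rewrite h' (negbTE h).
  - case: (boolP (B y true false)) => h; first by rewrite KC.
    have h' : B y true true by move: (c2 y); rewrite (negbTE h).
    rewrite TQ; first by rewrite KE. by rewrite h' (negbTE h).
  - case: (boolP (B y false true)) => h; first by rewrite KB.
    have h' : B y false false by move: (c1 y); rewrite (negbTE h) orbF.
    rewrite -TP; first by rewrite KA. by rewrite h' (negbTE h).
  - case: (boolP (B y false false)) => h; first by rewrite KA.
    have h' : B y false true by move: (c1 y); rewrite (negbTE h).
    rewrite TP; first by rewrite KB. by rewrite h' (negbTE h).
by move=> y d z y' d' z'; rewrite !Kall.
Qed.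

Lemma good_vertex alpha B : good alpha B -> is_vertex gamma (uvec gamma alpha B).
Proof. by move=> g; apply: conn_vertex; [apply: inH_u | apply: conn_u]. Qed.

Lemma good_distinct a1 B1 a2 B2 : good a1 B1 -> good a2 B2 ->
  Mequiv (uvec gamma a1 B1) (uvec gamma a2 B2) -> uvec gamma a1 B1 = uvec gamma a2 B2.
Proof.
case=> Hi1 _ _ _ [_ [i1 e1] _ _ _]; case=> Hi2 _ _ _ [_ [i2 e2] _ _ _] E.
have [s Hs] := Mequiv_shift E.
have bnd (a : R) (B : vec bool n) (i : 'I_n) : (if B i false false && B i false true
        then - a <= gamma 0%N + gamma i else gamma 0%N + gamma i <= - a) ->
        uvec gamma a B i false true <= - gamma i.
  rewrite /uvec; case: (B i false false); case: (B i false true) => /=; lra.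
have := Hs i1 false true; have := Hs i2 false true.
have := bnd _ _ _ (Hi1 i2); have := bnd _ _ _ (Hi2 i1).
rewrite {1 2}/uvec /= e1 e2 /= => h1 h2 h3 h4.
have s0 : s = 0 by lra.
apply: functional_extensionality => y; apply: functional_extensionality => d;
apply: functional_extensionality => z.
by rewrite Hs s0 oppr0; case: z; rewrite addr0.
Qed.


Lemma S1_good B t : inS1 B t -> good (- gamma 0%N - gamma t) B.
Proof.
case=> tn [Hge [Hlt [Hd [i [j [hi hj]]]]]].
have tm : (t < n)%N by lia.
have tmm : (t <= m)%N by lia.
have gtm : gamma t <= gamma m by apply: gle.
split.
- move=> i'; case: (leqP t i') => h.
    have [a b] := Hge i' h; rewrite a b /=; have := gle h (ltn_ord i'); lra.
  have := g0le i'; have := gle (ltnW h) tm; have := Hlt i' h.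
  by case: (B i' false false); case: (B i' false true) => //= _; lra.
- move=> j'; have := g0le j'; have := Hd j'.
  by case: (B j' true false); case: (B j' true true) => //= _; lra.
- move=> i'; case: (leqP t i') => h; first by have [-> ->] := Hge i' h.
  by move: (Hlt i' h); case: (B i' false false); case: (B i' false true).
- by move=> j'; move: (Hd j'); case: (B j' true false); case: (B j' true true).
- split.
  + by exists ord_max; have [] := Hge ord_max tmm.
  + by exists ord_max; have [] := Hge ord_max tmm.
  + by exists i.
  + by exists j.
  + left; exists (Ordinal tm); have [a b] := Hge (Ordinal tm) (leqnn t); by split.
Qed.

Lemma S2_good B : inS2 B -> good (- gamma 0%N - gamma m) B.
Proof.
case=> Hm [H0 [Hlt Hgt]].
have g0m : gamma 0%N <= gamma m by apply: gle.
split.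
- move=> i'; case: (ltnP i' m) => h.
    have := glem i'; have := Hlt i' h.
    by case: (B i' false false); case: (B i' false true) => //= _; lra.
  have e : nat_of_ord i' = m by have := ltn_ord i'; lia.
  have [a b] := Hm i' e; rewrite a b /= e; lra.
- move=> j'; case: (posnP j') => h.
    have [a b] := H0 j' h; rewrite a b /= h; lra.
  have := g0le j'; have := Hgt j' h.
  by case: (B j' true false); case: (B j' true true) => //= _; lra.
- move=> i'; case: (ltnP i' m) => h.
    by move: (Hlt i' h); case: (B i' false false); case: (B i' false true).
  have e : nat_of_ord i' = m by have := ltn_ord i'; lia.
  by have [-> ->] := Hm i' e.
- move=> j'; case: (posnP j') => h; first by have [-> ->] := H0 j' h.
  by move: (Hgt j' h); case: (B j' true false); case: (B j' true true).
- split.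
  + by exists ord_max; have [] := Hm ord_max erefl.
  + by exists ord_max; have [] := Hm ord_max erefl.
  + by exists ord0; have [] := H0 ord0 erefl.
  + by exists ord0; have [] := H0 ord0 erefl.
  + left; exists ord_max; have [a b] := Hm ord_max erefl; by split.
Qed.

Lemma S3_good B t : inS3 B t -> good (- gamma t - gamma m) B.
Proof.
case=> t1 [tm' [Hle [Hgt [Hd [i [j [hi hj]]]]]]].
have tm : (t < n)%N by lia.
have g0t : gamma 0%N <= gamma t by apply: gle.
split.
- move=> i'; have := glem i'; have := Hd i'.
  by case: (B i' false false); case: (B i' false true) => //= _; lra.
- move=> j'; case: (leqP j' t) => h.
    have [a b] := Hle j' h; rewrite a b /=; have := gle h tm; lra.
  have := gle (ltnW h) (ltn_ord j'); have := Hgt j' h.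
  by case: (B j' true false); case: (B j' true true) => //= _; lra.
- by move=> i'; move: (Hd i'); case: (B i' false false); case: (B i' false true).
- move=> j'; case: (leqP j' t) => h; first by have [-> ->] := Hle j' h.
  by move: (Hgt j' h); case: (B j' true false); case: (B j' true true).
- split.
  + by exists i.
  + by exists j.
  + by exists ord0; have [] := Hle ord0 (leq0n t).
  + by exists ord0; have [] := Hle ord0 (leq0n t).
  + right; exists (Ordinal tm); have [a b] := Hle (Ordinal tm) (leqnn t); by split.
Qed.

Lemma inV_good v : inV gamma v -> exists alpha B, v = uvec gamma alpha B /\ good alpha B.
Proof.
case=> B [[t [h ->]] | [[h ->] | [t [h ->]]]].
- by exists (- gamma 0%N - gamma t), B; split => //; apply: S1_good.
- by exists (- gamma 0%N - gamma m), B; split => //; apply: S2_good.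
- by exists (- gamma t - gamma m), B; split => //; apply: S3_good.
Qed.


Lemma leaf (v : vec R n) : Conn v -> forall y d z, exists i j d0 d1, tight v i j d0 d1 /\
  ((if d0 then (j, true, false) else (i, false, false)) = (y, d, z) \/
   (if d1 then (j, true, true) else (i, false, true)) = (y, d, z)).
Proof.
move=> Hc y d z; apply: NNPP => H.
pose K : vec bool n := fun y' d' z' => [&& y' == y, d' == d & z' == z].
have KE y' d' z' : K y' d' z' -> (y', d', z') = (y, d, z).
  by rewrite /K => /and3P [/eqP -> /eqP -> /eqP ->].
have HK : closedK v K.
  move=> i j d0 d1 T.
  have h0 : (if d0 then K j true false else K i false false) = false.
    apply/negbTE/negP => h; apply: H; exists i, j, d0, d1; split => //; left.
    by clear T; case: d0 h => /KE.
  have h1 : (if d1 then K j true true else K i false true) = false.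
    apply/negbTE/negP => h; apply: H; exists i, j, d0, d1; split => //; right.
    by clear T; case: d1 h => /KE.
  by rewrite h0 h1.
have := Hc K HK y d z y d (~~ z).
rewrite /K !eqxx /= => /(_ isT).
by case: z {H KE HK K}.
Qed.

Section Vert.
Variable v : vec R n.
Hypothesis Hv : inH gamma v.
Hypothesis Hc : Conn v.

Lemma iP (i j : 'I_n) : v i false false + v i false true <= gamma j - gamma i.
Proof. by have := Hv i j false false; rewrite MopE. Qed.
Lemma iQ (i j : 'I_n) : v j true false + v j true true <= gamma j - gamma i.
Proof. by have := Hv i j true true; rewrite MopE. Qed.
Lemma iX (i j : 'I_n) : v i false false + v j true true <= gamma j - gamma i.
Proof. by have := Hv i j false true; rewrite MopE. Qed.
Lemma iY (i j : 'I_n) : v j true false + v i false true <= gamma j - gamma i.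
Proof. by have := Hv i j true false; rewrite MopE. Qed.

Definition Pt (i : 'I_n) := v i false false + v i false true = gamma 0%N - gamma i.
Definition Qt (j : 'I_n) := v j true false + v j true true = gamma j - gamma m.
Definition Xt (i j : 'I_n) := v i false false + v j true true = gamma j - gamma i.
Definition Yt (i j : 'I_n) := v j true false + v i false true = gamma j - gamma i.

Lemma tPt (i j : 'I_n) : tight v i j false false -> Pt i.
Proof.
rewrite /tight MopE /cvec /Pt /= => h.
have := iP i ord0; have := g0le j; rewrite /=; lra.
Qed.
Lemma tQt (i j : 'I_n) : tight v i j true true -> Qt j.
Proof.
rewrite /tight MopE /cvec /Qt /= => h.
have := iQ ord_max j; have := glem i; rewrite /=; lra.
Qed.
Lemma tXt (i j : 'I_n) : tight v i j false true -> Xt i j.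
Proof. by rewrite /tight MopE /cvec /Xt. Qed.
Lemma tYt (i j : 'I_n) : tight v i j true false -> Yt i j.
Proof. by rewrite /tight MopE /cvec /Yt. Qed.

Lemma LA (i : 'I_n) : Pt i \/ exists j, Xt i j.
Proof.
have [i' [j [d0 [d1 [T [E|E]]]]]] := leaf Hc i false false.
- case: d0 T E => // T [?]; subst; case: d1 T => T; first by right; exists j; apply: tXt.
  by left; apply: (tPt T).
- by case: d1 T E.
Qed.
Lemma LB (i : 'I_n) : Pt i \/ exists j, Yt i j.
Proof.
have [i' [j [d0 [d1 [T [E|E]]]]]] := leaf Hc i false true.
- by case: d0 T E.
- case: d1 T E => // T [?]; subst; case: d0 T => T; first by right; exists j; apply: tYt.
  by left; apply: (tPt T).
Qed.
Lemma LC (j : 'I_n) : Qt j \/ exists i, Yt i j.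
Proof.
have [i [j' [d0 [d1 [T [E|E]]]]]] := leaf Hc j true false.
- case: d0 T E => // T [?]; subst; case: d1 T => T; first by left; apply: (tQt T).
  by right; exists i; apply: tYt.
- by case: d1 T E.
Qed.
Lemma LE (j : 'I_n) : Qt j \/ exists i, Xt i j.
Proof.
have [i [j' [d0 [d1 [T [E|E]]]]]] := leaf Hc j true true.
- by case: d0 T E.
- case: d1 T E => // T [?]; subst; case: d0 T => T; first by left; apply: (tQt T).
  by right; exists i; apply: tXt.
Qed.

Lemma existsX : exists i j, Xt i j.
Proof.
apply: NNPP => H.
have nX i j : ~ Xt i j by move=> h; apply: H; exists i, j.
have hP : Pt ord_max by case: (LA ord_max) => // [[j /nX]].
have hQ : Qt ord0 by case: (LE ord0) => // [[i /nX]].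
apply: (nX ord_max ord0); move: hP hQ; rewrite /Pt /Qt /Xt /=.
have := iY ord_max ord0; have := iX ord_max ord0; rewrite /=; lra.
Qed.

Lemma existsY : exists i j, Yt i j.
Proof.
apply: NNPP => H.
have nY i j : ~ Yt i j by move=> h; apply: H; exists i, j.
have hP : Pt ord_max by case: (LB ord_max) => // [[j /nY]].
have hQ : Qt ord0 by case: (LC ord0) => // [[i /nY]].
apply: (nY ord_max ord0); move: hP hQ; rewrite /Pt /Qt /Yt /=.
have := iY ord_max ord0; have := iX ord_max ord0; rewrite /=; lra.
Qed.

Section Vert2.
Variables i0 j0 i1 j1 : 'I_n.
Hypothesis hX : Xt i0 j0.
Hypothesis hY : Yt i1 j1.

Let p := v i0 false false + gamma i0.
Let q := v i1 false true + gamma i1.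

Definition Bv : vec bool n := fun y d z =>
  match d, z with
  | false, false => v y false false + gamma y == p
  | false, true => v y false true + gamma y == q
  | true, false => v y true false - gamma y == - q
  | true, true => v y true true - gamma y == - p
  end.
Arguments Bv : simpl never.

Lemma bA (i : 'I_n) : v i false false + gamma i <= p.
Proof. by have := iX i j0; move: hX; rewrite /Xt /p; lra. Qed.
Lemma bE (j : 'I_n) : v j true true - gamma j <= - p.
Proof. by have := iX i0 j; move: hX; rewrite /Xt /p; lra. Qed.
Lemma bB (i : 'I_n) : v i false true + gamma i <= q.
Proof. by have := iY i j1; move: hY; rewrite /Yt /q; lra. Qed.
Lemma bC (j : 'I_n) : v j true false - gamma j <= - q.
Proof. by have := iY i1 j; move: hY; rewrite /Yt /q; lra. Qed.

Lemma XtE (i j : 'I_n) : Xt i j -> v i false false + gamma i = p /\ v j true true - gamma j = - p.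
Proof. rewrite /Xt => h; have := bA i; have := bE j; split; lra. Qed.
Lemma YtE (i j : 'I_n) : Yt i j -> v i false true + gamma i = q /\ v j true false - gamma j = - q.
Proof. rewrite /Yt => h; have := bB i; have := bC j; split; lra. Qed.

Lemma NA (i : 'I_n) : ~~ Bv i false false -> Pt i.
Proof. move=> /eqP h; case: (LA i) => // [[j /XtE [] //]]. Qed.
Lemma NB (i : 'I_n) : ~~ Bv i false true -> Pt i.
Proof. move=> /eqP h; case: (LB i) => // [[j /YtE [] //]]. Qed.
Lemma NC (j : 'I_n) : ~~ Bv j true false -> Qt j.
Proof. move=> /eqP h; case: (LC j) => // [[i /YtE [] //]]. Qed.
Lemma NE (j : 'I_n) : ~~ Bv j true true -> Qt j.
Proof. move=> /eqP h; case: (LE j) => // [[i /XtE [] //]]. Qed.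

Lemma N1 (i : 'I_n) : Bv i false false || Bv i false true.
Proof.
case: (boolP (Bv i false false)) => // hA; case: (boolP (Bv i false true)) => // hB.
exfalso.
pose K : vec bool n := fun y d z => (y == i) && ~~ d.
have HK : closedK v K.
  move=> i' j d0 d1 T; rewrite /K; case: d0 T; case: d1 => T /=; rewrite ?andbF ?andbT //.
  - apply/esym/negbTE/negP => /eqP e; subst i'.
    by have [e _] := YtE (tYt T); rewrite /Bv e eqxx in hB.
  - apply/negbTE/negP => /eqP e; subst i'.
    by have [e _] := XtE (tXt T); rewrite /Bv e eqxx in hA.
have := @Hc K HK i false false i true false.
by rewrite /K eqxx /= => /(_ isT).
Qed.

Lemma N3 (j : 'I_n) : Bv j true false || Bv j true true.
Proof.
case: (boolP (Bv j true false)) => // hC; case: (boolP (Bv j true true)) => // hE.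
exfalso.
pose K : vec bool n := fun y d z => (y == j) && d.
have HK : closedK v K.
  move=> i' j' d0 d1 T; rewrite /K; case: d0 T; case: d1 => T /=; rewrite ?andbF ?andbT //.
  - apply/negbTE/negP => /eqP e; subst j'.
    by have [_ e] := YtE (tYt T); rewrite /Bv e eqxx in hC.
  - apply/esym/negbTE/negP => /eqP e; subst j'.
    by have [_ e] := XtE (tXt T); rewrite /Bv e eqxx in hE.
have := @Hc K HK j true false j false false.
by rewrite /K eqxx /= => /(_ isT).
Qed.

Lemma bridge : (exists i : 'I_n, [/\ Bv i false false, Bv i false true & Pt i]) \/
               (exists j : 'I_n, [/\ Bv j true false, Bv j true true & Qt j]).
Proof.
apply: NNPP => H.
pose K : vec bool n := fun y d z =>
  match d, z with
  | false, false => Bv y false false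
  | false, true => ~~ Bv y false true
  | true, false => ~~ Bv y true false
  | true, true => Bv y true true
  end.
have HK : closedK v K.
  move=> i j d0 d1 T; rewrite /K; case: d0 T; case: d1 => T /=.
  - have hQ := tQt T; move: (N3 j).
    case: (boolP (Bv j true false)) => hC; case: (boolP (Bv j true true)) => hE //= _.
    by exfalso; apply: H; right; exists j.
  - have [e1 e2] := YtE (tYt T).
    by rewrite /Bv e1 e2 !eqxx.
  - have [e1 e2] := XtE (tXt T).
    by rewrite /Bv e1 e2 !eqxx.
  - have hP := tPt T; move: (N1 i).
    case: (boolP (Bv i false false)) => hA; case: (boolP (Bv i false true)) => hB //= _.
    by exfalso; apply: H; left; exists i.
have := @Hc K HK i0 false false i1 false true.
by rewrite /K /Bv /p /q !eqxx /= => /(_ isT).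
Qed.

Lemma shiftM : Mequiv v (uvec gamma (- (p + q)) Bv).
Proof.
apply: (@shift_Mequiv _ _ (- q)) => y d z.
case: d; case: z; rewrite /uvec /=.
- case: (boolP (Bv y true true)) => h.
    by move: h; rewrite /Bv => /eqP h; lra.
  have hQ := NE h; move: (N3 y); rewrite (negbTE h) orbF /Bv => /eqP h2.
  by move: hQ; rewrite /Qt; lra.
- case: (boolP (Bv y true false)) => h.
    by move: h; rewrite /Bv => /eqP h; lra.
  have hQ := NC h; move: (N3 y); rewrite (negbTE h) /= /Bv => /eqP h2.
  by move: hQ; rewrite /Qt; lra.
- case: (boolP (Bv y false true)) => h.
    by move: h; rewrite /Bv => /eqP h; lra.
  have hP := NB h; move: (N1 y); rewrite (negbTE h) orbF /Bv => /eqP h2.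
  by move: hP; rewrite /Pt; lra.
- case: (boolP (Bv y false false)) => h.
    by move: h; rewrite /Bv => /eqP h; lra.
  have hP := NA h; move: (N1 y); rewrite (negbTE h) /= /Bv => /eqP h2.
  by move: hP; rewrite /Pt; lra.
Qed.

Lemma eqR (x y : R) : x == y -> x = y.
Proof. by move/eqP. Qed.

Lemma bothI1 (i : 'I_n) : Bv i false false && Bv i false true -> p + q <= gamma 0%N + gamma i.
Proof. by rewrite /Bv => /andP [/eqP h1 /eqP h2]; have := iP i ord0; rewrite /=; lra. Qed.
Lemma bothI2 (i : 'I_n) : ~~ (Bv i false false && Bv i false true) -> gamma 0%N + gamma i < p + q.
Proof.
move=> nb; have hP : Pt i.
  by case: (boolP (Bv i false false)) => hA; [apply: NB; move: nb; rewrite hA | apply: NA].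
move: hP; rewrite /Pt => hP.
case: (boolP (Bv i false false)) => hA.
- have hB : ~~ Bv i false true by move: nb; rewrite hA.
  have e : v i false false + gamma i = p by move: hA; rewrite /Bv => /eqR.
  have lt : v i false true + gamma i < q by rewrite lt_neqAle bB andbT; move: hB; rewrite /Bv.
  lra.
- have hB : Bv i false true by move: (N1 i); rewrite (negbTE hA).
  have e : v i false true + gamma i = q by move: hB; rewrite /Bv => /eqR.
  have lt : v i false false + gamma i < p by rewrite lt_neqAle bA andbT; move: hA; rewrite /Bv.
  lra.
Qed.
Lemma bothJ1 (j : 'I_n) : Bv j true false && Bv j true true -> gamma j + gamma m <= p + q.
Proof. by rewrite /Bv => /andP [/eqR h1 /eqR h2]; have := iQ ord_max j; rewrite /=; lra. Qed.
Lemma bothJ2 (j : 'I_n) : ~~ (Bv j true false && Bv j true true) -> p + q < gamma j + gamma m.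
Proof.
move=> nb; have hQ : Qt j.
  by case: (boolP (Bv j true false)) => hC; [apply: NE; move: nb; rewrite hC | apply: NC].
move: hQ; rewrite /Qt => hQ.
case: (boolP (Bv j true false)) => hC.
- have hE : ~~ Bv j true true by move: nb; rewrite hC.
  have e : v j true false - gamma j = - q by move: hC; rewrite /Bv => /eqR.
  have lt : v j true true - gamma j < - p by rewrite lt_neqAle bE andbT; move: hE; rewrite /Bv.
  lra.
- have hE : Bv j true true by move: (N3 j); rewrite (negbTE hC).
  have e : v j true true - gamma j = - p by move: hE; rewrite /Bv => /eqR.
  have lt : v j true false - gamma j < - q by rewrite lt_neqAle bC andbT; move: hC; rewrite /Bv.
  lra.
Qed.

Lemma differI (i : 'I_n) : ~~ (Bv i false false && Bv i false true) -> Bv i false false != Bv i false true.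
Proof. by move: (N1 i); case: (Bv i false false); case: (Bv i false true). Qed.
Lemma differJ (j : 'I_n) : ~~ (Bv j true false && Bv j true true) -> Bv j true false != Bv j true true.
Proof. by move: (N3 j); case: (Bv j true false); case: (Bv j true true). Qed.

Lemma caseS2 : p + q = gamma 0%N + gamma m -> inS2 Bv.
Proof.
move=> e; split; [|split; [|split]].
- move=> i hi; case: (boolP (Bv i false false && Bv i false true)) => [/andP//|nb].
  by have := bothI2 nb; rewrite hi /=; lra.
- move=> j hj; case: (boolP (Bv j true false && Bv j true true)) => [/andP//|nb].
  by have := bothJ2 nb; rewrite hj /=; lra.
- move=> i hi; apply: differI; apply/negP => /bothI1.
  have := glt hi (ltnSn m); lra.
- move=> j hj; apply: differJ; apply/negP => /bothJ1.
  have := glt hj (ltn_ord j); lra.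
Qed.

Lemma caseS1 (t : 'I_n) : (t < m)%N -> p + q = gamma 0%N + gamma t -> inS1 Bv t.
Proof.
move=> tm e; split; [by [] | split; [|split; [|split]]].
- move=> i hi; case: (boolP (Bv i false false && Bv i false true)) => [/andP//|nb].
  by have := bothI2 nb; have := gle hi (ltn_ord i); lra.
- move=> i hi; apply: differI; apply/negP => /bothI1.
  have := glt hi (ltn_ord t); lra.
- move=> j; apply: differJ; apply/negP => /bothJ1.
  have := glt tm (ltnSn m); have := g0le j; lra.
- have [_ e1] := YtE hY; have [_ e2] := XtE hX.
  by exists j1, j0; rewrite /Bv e1 e2 !eqxx.
Qed.

Lemma caseS3 (t : 'I_n) : (0 < t)%N -> p + q = gamma t + gamma m -> inS3 Bv t.
Proof.
move=> t0 e; split; [by [] | split; [by rewrite -ltnS | split; [|split; [|split]]]].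
- move=> j hj; case: (boolP (Bv j true false && Bv j true true)) => [/andP//|nb].
  by have := bothJ2 nb; have := gle hj (ltn_ord t); lra.
- move=> j hj; apply: differJ; apply/negP => /bothJ1.
  have := glt hj (ltn_ord j); lra.
- move=> i; apply: differI; apply/negP => /bothI1.
  have := glt t0 (ltn_ord t); have := glem i; lra.
- have [e1 _] := YtE hY; have [e2 _] := XtE hX.
  by exists i0, i1; rewrite /Bv e1 e2 !eqxx.
Qed.

Lemma final : exists w, inV gamma w /\ Mequiv v w.
Proof.
have hs2 : p + q = gamma 0%N + gamma m ->
    exists w, inV gamma w /\ Mequiv v w.
  move=> e; exists (uvec gamma (- gamma 0%N - gamma m) Bv); split.
    by exists Bv; right; left; split => //; apply: caseS2.
  have -> : - gamma 0%N - gamma m = - (p + q) by lra.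
  exact: shiftM.
case: bridge => [[i [h1 h2 hP]] | [j [h1 h2 hQ]]].
- have e : p + q = gamma 0%N + gamma i.
    by move: h1 h2 hP; rewrite /Bv /Pt => /eqP h1 /eqP h2; lra.
  case: (ltnP i m) => im.
    exists (uvec gamma (- gamma 0%N - gamma i) Bv); split.
      by exists Bv; left; exists i; split => //; apply: caseS1.
    have -> : - gamma 0%N - gamma i = - (p + q) by lra.
    exact: shiftM.
  apply: hs2; have -> : (m = i)%N by have := ltn_ord i; lia.
  exact: e.
- have e : p + q = gamma j + gamma m.
    by move: h1 h2 hQ; rewrite /Bv /Qt => /eqP h1 /eqP h2; lra.
  case: (posnP j) => j0'.
    by apply: hs2; rewrite e j0'.
  exists (uvec gamma (- gamma j - gamma m) Bv); split.
    by exists Bv; right; right; exists j; split => //; apply: caseS3.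
  have -> : - gamma j - gamma m = - (p + q) by lra.
  exact: shiftM.
Qed.

End Vert2.
End Vert.
End S.

Theorem theorem1 (R : realFieldType) (n : nat) (gamma : nat -> R) :
  (0 < n)%N ->
  (forall i j : nat, (i < j < n)%N -> gamma i < gamma j) ->
  (forall v : vec R n, inV gamma v -> is_vertex gamma v) /\
  (forall v1 v2 : vec R n, inV gamma v1 -> inV gamma v2 -> v1 <> v2 ->
     ~ Mequiv v1 v2) /\
  (forall v : vec R n, is_vertex gamma v ->
     exists w : vec R n, inV gamma w /\ Mequiv v w).
Proof.
case: n => [//|m] _ gmono.
split; [|split].
- move=> v /(inV_good gmono) [alpha [B [-> g]]].
  exact: (good_vertex gmono g).
- move=> v1 v2 /(inV_good gmono) [a1 [B1 [-> g1]]]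
    /(inV_good gmono) [a2 [B2 [-> g2]]] ne E.
  by apply: ne; apply: (good_distinct g1 g2 E).
- move=> v hv; have Hv := hv.1; have Hc := vertex_conn hv.
  have [i0 [j0 hX]] := existsX gmono Hv Hc.
  have [i1 [j1 hY]] := existsY gmono Hv Hc.
  exact: (final gmono Hv Hc hX hY).
Qed.
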